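(* Let $f\in R(A_2)$, $g\in R(A_1^* )$, $k\in K_2$, let $x\in D_2=D(A_2)\cap D(A_1^* )$ be the unique solution of $A_2x=f$, $A_1^*x=g$, $\pi_2x=k$, let $\tilde x\in H_2$, and set $e:=x-\tilde x$, $e_{A_1}:=\pi_{A_1}e$, $e_{A_2^*}:=\pi_{A_2^*}e$, $e_{K_2}:=\pi_2e$. Then: (i) $e=e_{A_1}+e_{K_2}+e_{A_2^*}\in R(A_1)\oplus K_2\oplus R(A_2^* )$ and $\|e\|^2_{H_2}=\|e_{A_1}\|^2_{H_2}+\|e_{K_2}\|^2_{H_2}+\|e_{A_2^*}\|^2_{H_2}$; (ii) $\|e_{A_1}\|^2_{H_2}=\max_{\varphi\in D(A_1)}\big(2\langle g,\varphi\rangle_{H_1}-\langle2\tilde x+A_1\varphi,A_1\varphi\rangle_{H_2}\big)$, the maximum being attained e.g. at $\hat\varphi:=(\mathcal{A}_1)^{-1}e_{A_1}\in D(\mathcal{A}_1)$; (iii) $\|e_{A_2^*}\|^2_{H_2}=\max_{\phi\in D(A_2^* )}\big(2\langle f,\phi\rangle_{H_3}-\langle2\tilde x+A_2^*\phi,A_2^*\phi\rangle_{H_2}\big)$, the maximum being attained e.g. at $\hat\phi:=(\mathcal{A}_2^* )^{-1}e_{A_2^*}\in D(\mathcal{A}_2^* )$; (iv) $\|e_{K_2}\|^2_{H_2}=\max_{\theta\in K_2}\langle2(k-\tilde x)-\theta,\theta\rangle_{H_2}$, the maximum being attained at $\hat\theta:=e_{K_2}$. If $\tilde x=k+\tilde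 x_\perp$ with some $\tilde x_\perp\in K_2^\perp$, then $e_{K_2}=0$, and in (ii) and (iii) $\tilde x$ can be replaced by $\tilde x_\perp$.
   Context: Let $H_0,\dots,H_4$ be Hilbert spaces and, for $\ell=0,\dots,3$, $A_\ell:D(A_\ell)\subset H_\ell\to H_{\ell+1}$ densely defined closed linear operators with Hilbert space adjoints $A_\ell^*$, satisfying $R(A_\ell)\subset N(A_{\ell+1})$ for $\ell=0,1,2$. Standing assumption: $R(A_1)$ and $R(A_2)$ are closed and $K_2$ is finite dimensional. $K_2:=N(A_2)\cap N(A_1^* )$, $\pi_2:H_2\to K_2$ orthogonal projector; $\pi_{A_1}$, $\pi_{A_2^*}$ orthogonal projectors of $H_2$ onto $R(A_1)$, $R(A_2^* )$. Reduced operators $\mathcal{A}_1:=A_1|_{D(A_1)\cap R(A_1^* )}$ and $\mathcal{A}_2^*:=A_2^*|_{D(A_2^* )\cap R(A_2)}$ (injective, with ranges $R(A_1)$ and $R(A_2^* )$). *)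

(* Defs.v *)
From HB Require Import structures.
From mathcomp Require Import all_boot all_order all_algebra.
From mathcomp Require Import all_classical all_reals all_analysis.
Set Implicit Arguments. Unset Strict Implicit. Unset Printing Implicit Defensive.
Import Order.TTheory GRing.Theory Num.Theory.
Local Open Scope classical_set_scope.
Local Open Scope ring_scope.

Section Defs.
Variable R : realType.

(* ip is a (real) inner product inducing the norm of V; together with
   completeness of V this makes V a real Hilbert space. *)
Definition is_inner_product (V : normedModType R) (ip : V -> V -> R) : Prop :=
  [/\ (forall x y, ip x y = ip y x),
      (forall (a : R) x y z, ip (a *: x + y) z = a * ip x z + ip y z)
    & (forall x, `|x| ^+ 2 = ip x x)].

Definition is_subspace (V : lmodType R) (D : set V) : Prop :=
  D 0 /\ forall (a : R) x y, D x -> D y -> D (a *: x + y).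

(* A : D(A) ⊂ V -> W is a densely defined closed linear operator;
   only the values of A on D are relevant. *)
Definition dd_closed_op (V W : normedModType R) (D : set V) (A : V -> W) : Prop :=
  [/\ is_subspace D,
      (forall (a : R) x y, D x -> D y -> A (a *: x + y) = a *: A x + A y),
      closure D = setT
    & closed [set p : V * W | D p.1 /\ p.2 = A p.1]].

Definition is_adjoint (V W : normedModType R) (ipV : V -> V -> R) (ipW : W -> W -> R)
  (D : set V) (A : V -> W) (Ds : set W) (As : W -> V) : Prop :=
  (forall y, Ds y <-> exists z, forall x, D x -> ipW (A x) y = ipV x z) /\
  (forall y, Ds y -> forall x, D x -> ipW (A x) y = ipV x (As y)).

Definition ran (V W : Type) (D : set V) (A : V -> W) : set W := A @` D.
Definition ker (V : Type) (W : lmodType R) (D : set V) (A : V -> W) : set V :=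
  [set x | D x /\ A x = 0].

Definition complex_prop (U V W : lmodType R) (D : set U) (A : U -> V)
  (D' : set V) (A' : V -> W) : Prop := ran D A `<=` ker D' A'.

Definition finite_dim (V : lmodType R) (S : set V) : Prop :=
  exists (n : nat) (b : 'I_n -> V),
    forall x, S x -> exists c : 'I_n -> R, x = \sum_(i < n) c i *: b i.

Definition orth_compl (V : lmodType R) (ip : V -> V -> R) (S : set V) : set V :=
  [set y | forall z, S z -> ip y z = 0].

Definition is_orth_proj (V : lmodType R) (ip : V -> V -> R) (S : set V) (P : V -> V) : Prop :=
  forall x, S (P x) /\ (forall y, S y -> ip (x - P x) y = 0).

End Defs.

(* Main.v *)
Require Import Defs.
From HB Require Import structures.
From mathcomp Require Import all_boot all_order all_algebra.
From mathcomp Require Import all_classical all_reals all_analysis.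
From mathcomp Require Import ring lra.
Import Order.TTheory GRing.Theory Num.Theory.
Local Open Scope classical_set_scope.
Local Open Scope ring_scope.
Set Implicit Arguments. Unset Strict Implicit. Unset Printing Implicit Defensive.

Section IP.
Variables (R : realType) (V : normedModType R) (ip : V -> V -> R).
Hypothesis hip : is_inner_product ip.

Lemma ipC x y : ip x y = ip y x. Proof. by case: hip. Qed.
Lemma ipxx x : ip x x = `|x| ^+ 2. Proof. by case: hip. Qed.
Lemma ipZDl a x y z : ip (a *: x + y) z = a * ip x z + ip y z. Proof. by case: hip. Qed.
Lemma ip0l z : ip 0 z = 0.
Proof. have := ipZDl 1 0 0 z. rewrite scale1r addr0 mul1r => h.
have : ip 0 z + 0 = ip 0 z + ip 0 z by rewrite addr0. by move/addrI. Qed.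
Lemma ipDl x y z : ip (x + y) z = ip x z + ip y z.
Proof. by rewrite -(scale1r x) ipZDl mul1r scale1r. Qed.
Lemma ipZl a x z : ip (a *: x) z = a * ip x z.
Proof. by rewrite -(addr0 (a *: x)) ipZDl ip0l addr0. Qed.
Lemma ipNl x z : ip (- x) z = - ip x z.
Proof. by rewrite -scaleN1r ipZl mulN1r. Qed.
Lemma ipBl x y z : ip (x - y) z = ip x z - ip y z.
Proof. by rewrite ipDl ipNl. Qed.
Lemma ip0r z : ip z 0 = 0. Proof. by rewrite ipC ip0l. Qed.
Lemma ipDr x y z : ip z (x + y) = ip z x + ip z y.
Proof. by rewrite ipC ipDl !(ipC z). Qed.
Lemma ipZr a x z : ip z (a *: x) = a * ip z x.
Proof. by rewrite ipC ipZl ipC. Qed.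
Lemma ipNr x z : ip z (- x) = - ip z x.
Proof. by rewrite ipC ipNl ipC. Qed.
Lemma ipBr x y z : ip z (x - y) = ip z x - ip z y.
Proof. by rewrite ipDr ipNr. Qed.

Lemma normDZ2 s t x y : `|s *: x + t *: y| ^+ 2 =
  s ^+ 2 * `|x| ^+ 2 + 2 * s * t * ip x y + t ^+ 2 * `|y| ^+ 2.
Proof.
rewrite -!ipxx ipDl !ipDr !ipZl !ipZr (ipC y x). ring.
Qed.

Lemma normDZ2' t x y : `|x + t *: y| ^+ 2 = `|x| ^+ 2 + 2 * t * ip x y + t ^+ 2 * `|y| ^+ 2.
Proof. by rewrite -{1}(scale1r x) normDZ2; ring. Qed.

Lemma normD2 x y : `|x + y| ^+ 2 = `|x| ^+ 2 + 2 * ip x y + `|y| ^+ 2.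
Proof. by rewrite -(scale1r x) -(scale1r y) normDZ2 !scale1r; ring. Qed.
Lemma normB2 x y : `|x - y| ^+ 2 = `|x| ^+ 2 - 2 * ip x y + `|y| ^+ 2.
Proof. by rewrite normD2 ipNr normrN; ring. Qed.

Lemma ip_le x y : ip x y <= `|x| * `|y|.
Proof.
have h := normDZ2 `|y| (- `|x|) x y.
have h0 : 0 <= (Num.norm (`|y| *: x + (- `|x|) *: y)) ^+ 2 by rewrite sqr_ge0.
rewrite h in h0.
have [->|x0] := eqVneq x 0; first by rewrite ip0l normr0 mul0r.
have [->|y0] := eqVneq y 0; first by rewrite ip0r normr0 mulr0.
have px : 0 < `|x| by rewrite normr_gt0.
have py : 0 < `|y| by rewrite normr_gt0.
have pxy : 0 < `|x| * `|y| by rewrite mulr_gt0.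
nra.
Qed.

Lemma CS x y : `|ip x y| <= `|x| * `|y|.
Proof.
rewrite ler_norml ip_le andbT -(normrN y) lerNl -ipNr. exact: ip_le.
Qed.

Lemma norm0_ip x : ip x x = 0 -> x = 0.
Proof. rewrite ipxx => /eqP; rewrite sqrf_eq0 normr_eq0 => /eqP //. Qed.

Lemma proj_closed (S : set V) P : is_orth_proj ip S P ->
  forall x, (forall e, 0 < e -> exists y, S y /\ `|x - y| < e) -> S x.
Proof.
move=> hP x hx; have [SP orth] := hP x.
set d := x - P x.
suff d0 : d = 0 by move: SP; rewrite (_ : P x = x) //; apply/eqP; rewrite eq_sym -subr_eq0 -/d d0.
have key : forall e, 0 < e -> `|d| ^+ 2 <= `|d| * e.
  move=> e e0; have [y [Sy hy]] := hx e e0.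
  have -> : `|d| ^+ 2 = ip d (x - y).
    rewrite -ipxx ipBr (orth _ Sy) subr0 {2}/d ipBr (orth _ SP) subr0 //.
  apply: (le_trans (ip_le d (x - y))); rewrite ler_wpM2l //; exact: ltW.
apply/eqP; rewrite -normr_eq0; apply/eqP.
have [->|dn] := eqVneq `|d| 0 => //.
have dp : 0 < `|d| by rewrite lt_def dn normr_ge0.
have := key (`|d| / 2); rewrite divr_gt0 // => /(_ isT) h.
nra.
Qed.

Lemma dense_ip0 (D : set V) w : closure D = setT ->
  (forall phi, D phi -> ip phi w = 0) -> w = 0.
Proof.
move=> cD h.
have hw : closure D w by rewrite cD.
have key : forall e, 0 < e -> `|w| ^+ 2 <= e * `|w|.
  move=> e e0.
  have [phi [Dphi bphi]] : D `&` ball w e !=set0.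
    apply: hw; exact: nbhsx_ballx.
  move: bphi; rewrite -ball_normE /= => bphi.
  have -> : `|w| ^+ 2 = ip (w - phi) w by rewrite ipBl (h _ Dphi) subr0 ipxx.
  apply: (le_trans (ip_le _ _)); apply: ler_wpM2r => //; exact: ltW.
apply/eqP; rewrite -normr_eq0; apply/eqP.
have [->|dn] := eqVneq `|w| 0 => //.
have dp : 0 < `|w| by rewrite lt_def dn normr_ge0.
have := key (`|w| / 2); rewrite divr_gt0 // => /(_ isT) h'.
nra.
Qed.

End IP.
Section Real.
Variable R : realType.
Lemma small_le0 (a K : R) : 0 <= K -> (forall e, 0 < e -> a <= K * e) -> a <= 0.
Proof.
move=> K0 h; apply/ler_addgt0Pr => e e0; rewrite add0r.
have K1 : 0 < K + 1 by lra.
apply: (le_trans (h (e / (K + 1)) _)); first by rewrite divr_gt0.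
rewrite mulrA ler_pdivrMr //; nra.
Qed.
Lemma small_eq0 (c K : R) : 0 <= K -> (forall e, 0 < e -> `|c| <= K * e) -> c = 0.
Proof.
move=> K0 h; have hc := @small_le0 `|c| K K0 h; apply/eqP; rewrite -normr_eq0 eq_le hc normr_ge0 //.
Qed.
End Real.

Section Adj.
Variables (R : realType) (X Y : normedModType R) (ipX : X -> X -> R) (ipY : Y -> Y -> R).
Hypotheses (hX : is_inner_product ipX) (hY : is_inner_product ipY).
Variables (D : set X) (A : X -> Y) (Ds : set Y) (As : Y -> X).
Hypotheses (hA : dd_closed_op D A) (hAs : is_adjoint ipX ipY D A Ds As).

Lemma adj_eq y z : Ds y -> (forall phi, D phi -> ipY (A phi) y = ipX phi z) -> As y = z.
Proof.
move=> Dy h; case: hA => _ _ cD _; case: hAs => _ h2.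
apply/eqP; rewrite -subr_eq0; apply/eqP; apply: (dense_ip0 hX cD) => phi Dphi.
by rewrite (ipBr hX) -(h2 _ Dy _ Dphi) (h _ Dphi) subrr.
Qed.

Lemma adj_char y z : (forall phi, D phi -> ipY (A phi) y = ipX phi z) -> Ds y /\ As y = z.
Proof.
move=> h; have Dy : Ds y by case: hAs => h1 _; apply/h1; exists z.
by split => //; apply: adj_eq.
Qed.

Lemma adj_lin a y1 y2 : Ds y1 -> Ds y2 ->
  Ds (a *: y1 + y2) /\ As (a *: y1 + y2) = a *: As y1 + As y2.
Proof.
move=> D1 D2; apply: adj_char => phi Dphi; case: hAs => _ h2.
by rewrite (ipDr hY) (ipZr hY) (ipDr hX) (ipZr hX) !h2.
Qed.

Lemma adj0 : Ds 0 /\ As 0 = 0.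
Proof. apply: adj_char => phi _; by rewrite (ip0r hY) (ip0r hX). Qed.

Lemma adj_closed x w : (forall e, 0 < e -> exists y, Ds y /\ `|x - y| < e /\ `|w - As y| < e) ->
  Ds x /\ As x = w.
Proof.
move=> h; apply: adj_char => phi Dphi; case: hAs => _ h2.
apply/eqP; rewrite -subr_eq0; apply/eqP.
apply: (@small_eq0 _ _ (`|A phi| + `|phi|)); first by rewrite addr_ge0.
move=> e e0; have [y [Dy [h1 h3]]] := h e e0.
have -> : ipY (A phi) x - ipX phi w = ipY (A phi) (x - y) - ipX phi (w - As y).
  by rewrite (ipBr hY) (ipBr hX) (h2 _ Dy _ Dphi); ring.
apply: (le_trans (ler_normB _ _)); rewrite mulrDl.
apply: lerD; (apply: le_trans; first exact: CS); apply: ler_wpM2l => //; exact: ltW.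
Qed.

Lemma graph_closed x w : (forall e, 0 < e -> exists y, D y /\ `|x - y| < e /\ `|w - A y| < e) ->
  D x /\ A x = w.
Proof.
move=> h; case: hA => _ _ _ cG.
have : closure [set p : X * Y | D p.1 /\ p.2 = A p.1] (x, w).
  move=> B /nbhs_ballP [e /= e0 hB].
  have [y [Dy [h1 h3]]] := h e e0.
  exists (y, A y); split => //; apply: hB; split; rewrite -ball_normE //.
by move/closure_id: cG => <- -[/= ? ->].
Qed.

End Adj.

Section Cauchy.
Variables (R : realType) (Z : completeNormedModType R).

Lemma cauchy_seq (v : nat -> Z) (K : R) : 0 <= K ->
  (forall n k, `|v n - v k| ^+ 2 <= K * (n.+1%:R^-1 + k.+1%:R^-1)) ->
  exists l : Z, v n @[n --> \oo] --> l.
Proof.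
move=> K0 hv.
have : cvg (v @ \oo).
  suff : cauchy (v @ \oo) by exact: cauchy_cvg.
  suff : cauchy_ex (v @ \oo) by exact: cauchy_exP.
  move=> e e0; rewrite /fmapE -ball_normE /ball_.
  pose N := Num.truncn (2 * K / e ^+ 2).
  have hN : 2 * K / e ^+ 2 < N.+1%:R.
    by rewrite truncnS_gt.
  exists (v N), N => // n nN /=.
  have e2 : 0 < e ^+ 2 by rewrite exprn_gt0.
  have hN' : 2 * K < N.+1%:R * e ^+ 2 by rewrite -ltr_pdivrMr.
  have Np : 0 < N.+1%:R :> R by [].
  have hn : n.+1%:R^-1 <= N.+1%:R^-1 :> R.
    by rewrite lef_pV2 ?posrE // ler_nat ltnS.
  have h1 := hv N n.
  have h2 : `|v N - v n| ^+ 2 < e ^+ 2.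
    apply: (le_lt_trans h1).
    apply: (@le_lt_trans _ _ (K * (2 * N.+1%:R^-1))).
      by apply: ler_wpM2l => //; rewrite mulr_natl mulr2n lerD2l.
    by rewrite mulrA ltr_pdivrMr // mulrC (mulrC (e ^+ 2)).
  have := normr_ge0 (v N - v n); nra.
by rewrite cvg_ex //=.
Qed.
End Cauchy.

Section Quad.
Variable R : realType.
Lemma quad0 (b c : R) : 0 <= c -> (forall t, 0 <= 2 * t * b + t ^+ 2 * c) -> b = 0.
Proof.
move=> c0 h; have := h (- b / (c + 1)).
have c1 : 0 < c + 1 by lra.
have -> : 2 * (- b / (c + 1)) * b + (- b / (c + 1)) ^+ 2 * c =
   - (b ^+ 2 * (c + 2)) / (c + 1) ^+ 2.
  by field; lra.
rewrite pmulr_lge0 ?invr_gt0 ?exprn_gt0 // => hb.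
apply/eqP; rewrite -sqrf_eq0 eq_le sqr_ge0 andbT; nra.
Qed.
End Quad.

Lemma aux_bnd (R : realType) (jn jk jm m a b n : R) : jn < m + a -> jk < m + b -> m <= jm ->
  jn + jk = 2 * jm + n / 2 -> n <= 2 * (a + b).
Proof. move=> *; lra. Qed.

Section Min.
Variables (R : realType) (X Y : completeNormedModType R) (ipX : X -> X -> R) (ipY : Y -> Y -> R).
Hypotheses (hX : is_inner_product ipX) (hY : is_inner_product ipY).
Variables (C : set X) (T : X -> Y) (alpha M : R) (p : X) (q : Y).
Hypotheses (hC : is_subspace C)
  (hT : forall a x y, C x -> C y -> T (a *: x + y) = a *: T x + T y)
  (hcl : forall x w, (forall e, 0 < e -> exists y, C y /\ `|x - y| < e /\ `|w - T y| < e) ->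
     C x /\ T x = w)
  (ha : 0 <= alpha) (hM : 0 < M)
  (hcoer : forall x, C x -> `|x| ^+ 2 <= M * (alpha * `|x| ^+ 2 + `|T x| ^+ 2)).

Let N x := alpha * `|x| ^+ 2 + `|T x| ^+ 2.
Let J x := N x - 2 * ipX x p - 2 * ipY (T x) q.
Let beta x h := alpha * ipX x h + ipY (T x) (T h) - ipX h p - ipY (T h) q.

Let C0 : C 0. Proof. by case: hC. Qed.
Let CZD a x y : C x -> C y -> C (a *: x + y). Proof. by case: hC => _; apply. Qed.
Let CB x y : C x -> C y -> C (x - y).
Proof. move=> cx cy; rewrite addrC -scaleN1r; exact: CZD. Qed.
Let TB x y : C x -> C y -> T (x - y) = T x - T y.
Proof. move=> cx cy; rewrite addrC -scaleN1r hT // scaleN1r addrC //. Qed.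
Let T0 : T 0 = 0.
Proof. have := hT 1 C0 C0; rewrite !scale1r !addr0 => h.
have : T 0 + 0 = T 0 + T 0 by rewrite addr0 {1}h. by move/addrI. Qed.

Let N_ge0 x : 0 <= N x.
Proof. by rewrite /N addr_ge0 // mulr_ge0. Qed.

Let Jmid a b : C a -> C b ->
  J a + J b = 2 * J (2^-1 *: a + 2^-1 *: b) + N (a - b) / 2.
Proof.
move=> ca cb; rewrite /J /N.
have cb' : C (2^-1 *: b) by rewrite -[_ *: b]addr0; apply: CZD.
have -> : T (2^-1 *: a + 2^-1 *: b) = 2^-1 *: T a + 2^-1 *: T b.
  by rewrite hT // -[2^-1 *: b]addr0 hT // T0 addr0.
rewrite TB // !(normDZ2 hX) !(normDZ2 hY) (normB2 hX) (normB2 hY) !(ipDl hX) !(ipZl hX) !(ipDl hY) !(ipZl hY).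
by field.
Qed.

Let Jvar x h t : C x -> C h ->
  J (x + t *: h) = J x + 2 * t * beta x h + t ^+ 2 * N h.
Proof.
move=> cx ch; rewrite /J /N /beta.
have -> : T (x + t *: h) = T x + t *: T h by rewrite addrC hT // addrC.
rewrite (normDZ2' hX) (normDZ2' hY) !(ipDl hX) !(ipZl hX) !(ipDl hY) !(ipZl hY).
ring.
Qed.

Let Jlb x : C x -> - (2 * M * `|p| ^+ 2 + 2 * `|q| ^+ 2) <= J x.
Proof.
move=> cx; have h1 := ip_le hX x p; have h2 := ip_le hY (T x) q.
have h3 := hcoer cx.
have a0 := normr_ge0 x; have b0 := normr_ge0 p; have c0 := normr_ge0 (T x); have d0 := normr_ge0 q.
have e1 : 2 * `|x| * `|p| <= N x / 2 + 2 * M * `|p| ^+ 2.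
  rewrite -(@ler_pM2l _ (2 * M)); last by rewrite mulr_gt0.
  have := sqr_ge0 (`|x| - 2 * M * `|p|).
  rewrite /N in h3 *; nra.
have e2 : 2 * `|T x| * `|q| <= N x / 2 + 2 * `|q| ^+ 2.
  have : `|T x| ^+ 2 <= N x by rewrite /N lerDr mulr_ge0 // sqr_ge0.
  have := sqr_ge0 (`|T x| - 2 * `|q|).
  nra.
rewrite /J; lra.
Qed.

Lemma min_exists : exists x, C x /\
  forall h, C h -> alpha * ipX x h + ipY (T x) (T h) = ipX h p + ipY (T h) q.
Proof.
pose E := [set y | exists2 x, C x & J x = y].
pose m := inf E.
have lbE : has_lbound E.
  by exists (- (2 * M * `|p| ^+ 2 + 2 * `|q| ^+ 2)) => _ [x cx <-]; exact: Jlb.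
have infE : has_inf E by split => //; exists (J 0), 0.
have Jge x : C x -> m <= J x by move=> cx; apply: ge_inf => //; exists x.
have : forall n : nat, exists x, C x /\ J x < m + n.+1%:R^-1.
  move=> n; have [_ [x cx <-] hx] := @inf_adherent _ E (n.+1%:R^-1) ltac:(by []) infE.
  by exists x.
move=> /choice [u hu].
have bnd n k : N (u n - u k) <= 2 * (n.+1%:R^-1 + k.+1%:R^-1).
  have [cn jn] := hu n; have [ck jk] := hu k.
  have := Jmid cn ck; have := Jge _ (CZD (2^-1) cn (CZD (2^-1) ck C0)).
  rewrite addr0 => hm hh.
  set jm := J _ in hm hh; set s := N _ in hh *; set a := n.+1%:R^-1 in jn *; set b := k.+1%:R^-1 in jk *; lra.
have [xs hxs] : exists l : X, u n @[n --> \oo] --> l.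
  apply: (@cauchy_seq _ _ u (2 * M)); first by rewrite mulr_ge0 // ltW.
  move=> n k; apply: (le_trans (hcoer (CB (hu n).1 (hu k).1))).
  rewrite -mulrA [X in _ <= X]mulrCA; apply: ler_wpM2l; [exact: ltW | exact: bnd].
have [w hw] : exists l : Y, (T \o u) n @[n --> \oo] --> l.
  apply: (@cauchy_seq _ _ (T \o u) 2) => //.
  move=> n k /=; rewrite -TB; [|exact: (hu n).1|exact: (hu k).1].
  apply: le_trans (bnd n k); rewrite /N lerDr mulr_ge0 // sqr_ge0.
have near_all e : 0 < e -> exists n, n.+1%:R^-1 < e /\ `|xs - u n| < e /\ `|w - T (u n)| < e.
  move=> e0.
  move/cvgrPdist_lt: hxs => /(_ e e0) H1.
  move/cvgrPdist_lt: hw => /(_ e e0) H2.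
  have H3 := near_infty_natSinv_lt (PosNum e0).
  have [n /= [h3 [h1 h2]]] := filter_ex (filterI H3 (filterI H1 H2)).
  by exists n.
have [cxs Txs] : C xs /\ T xs = w.
  apply: hcl => e e0; have [n [_ [h1 h2]]] := near_all e e0.
  by exists (u n); split => //; exact: (hu n).1.
exists xs; split => // h ch.
suff hb : beta xs h = 0.
  have : beta xs h + (ipX h p + ipY (T h) q) = ipX h p + ipY (T h) q by rewrite hb add0r.
  rewrite /beta => <-; ring.
apply: (@quad0 _ _ (N h)) => // t.
rewrite -subr_le0.
apply: (@small_le0 _ _ (1 + 2 * `|t| * (alpha * `|h| + `|T h|))).
  by rewrite addr_ge0 // mulr_ge0 // ?mulr_ge0 // addr_ge0 // mulr_ge0.
move=> e e0; have [n [h0 [h1 h2]]] := near_all e e0.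
have [cn jn] := hu n.
have jv := Jvar t cn ch.
have jm := Jge _ (CZD t ch cn); rewrite addrC in jm.
have db : `|beta (u n) h - beta xs h| <= alpha * `|xs - u n| * `|h| + `|w - T (u n)| * `|T h|.
  have -> : beta (u n) h - beta xs h = alpha * ipX (u n - xs) h + ipY (T (u n) - w) (T h).
    by rewrite /beta (ipBl hX) (ipBl hY) Txs; ring.
  apply: (le_trans (ler_normD _ _)); rewrite normrM (ger0_norm ha) -mulrA.
  apply: lerD; first (apply: ler_wpM2l => //).
    by rewrite distrC; exact: CS.
  by rewrite distrC; exact: CS.
have tb : 2 * t * (beta (u n) h - beta xs h) <= 2 * `|t| * (alpha * `|xs - u n| * `|h| + `|w - T (u n)| * `|T h|).
  apply: (le_trans (ler_norm _)); rewrite !normrM (ger0_norm (ler0n _ 2)) -mulrA.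
  rewrite -mulrA; apply: ler_wpM2l => //; apply: ler_wpM2l => //.
have k1 : alpha * `|xs - u n| * `|h| <= alpha * e * `|h|.
  by apply: ler_wpM2r => //; apply: ler_wpM2l => //; exact: ltW.
have k2 : `|w - T (u n)| * `|T h| <= e * `|T h|.
  by apply: ler_wpM2r => //; exact: ltW.
have k3 : 2 * `|t| * (alpha * `|xs - u n| * `|h| + `|w - T (u n)| * `|T h|) <=
          2 * `|t| * (alpha * e * `|h| + e * `|T h|).
  by apply: ler_wpM2l; [rewrite mulr_ge0 // | lra].
have -> : (1 + 2 * `|t| * (alpha * `|h| + `|T h|)) * e =
   e + 2 * `|t| * (alpha * e * `|h| + e * `|T h|) by ring.
set Jn := J (u n) in jv jn *.
set Jt := J (u n + t *: h) in jv jm.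
set a := n.+1%:R^-1 in jn h0.
set bn := beta (u n) h in jv tb.
lra.
Qed.

End Min.

Section Fried.
Variables (R : realType) (X : completeNormedModType R) (Y : normedModType R)
  (ipX : X -> X -> R) (ipY : Y -> Y -> R).
Hypotheses (hX : is_inner_product ipX) (hY : is_inner_product ipY).
Variables (C : set X) (T : X -> Y).
Hypotheses (hC : is_subspace C)
  (hT : forall a x y, C x -> C y -> T (a *: x + y) = a *: T x + T y)
  (hE : forall z, exists w, forall x, C x -> ipX z x = ipY (T x) w).

Lemma friedrichs : exists M, 0 < M /\ forall x, C x -> `|x| <= M * `|T x|.
Proof.
pose F := [set f : X -> R | exists x, C x /\ `|T x| <= 1 /\ f = fun z => ipX z x].
have hF : forall f, F f -> bounded_fun_norm f /\ linear f.
  move=> f [x [Cx [Tx ->]]]; split.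
    move=> r; exists (`|r| * `|x|) => z hz.
    apply: (le_trans (CS hX _ _)); apply: ler_wpM2r => //.
    exact: (le_trans hz (ler_norm r)).
  by move=> a u v; rewrite (ipZDl hX).
have pb : pointwise_bounded F.
  move=> z; have [w hw] := hE z; exists `|w| => f [x [Cx [Tx ->]]].
  rewrite hw //; apply: (le_trans (CS hY _ _)).
  by rewrite -[X in _ <= X]mul1r ler_wpM2r.
have [M hM] := @Banach_Steinhauss R X R F hF pb 1.
exists (`|M| + 1); split; first by rewrite ltr_pwDr // normr_ge0.
move=> x Cx.
have [w hw] := hE x.
have [Tx0|Tx0] := eqVneq (T x) 0.
  have : ipX x x = 0 by rewrite hw // Tx0 (ip0l hY).
  by move/(norm0_ip hX) ->; rewrite normr0 mulr_ge0 // addr_ge0.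
have [->|x0] := eqVneq x 0; first by rewrite normr0 mulr_ge0 // addr_ge0.
have sp : 0 < `|T x| by rewrite normr_gt0.
have xp : 0 < `|x| by rewrite normr_gt0.
set s := `|T x|.
have Cx' : C (s^-1 *: x) by rewrite -[_ *: x]addr0; case: hC => C0 hZ; exact: hZ.
have Tx' : `|T (s^-1 *: x)| <= 1.
  have -> : T (s^-1 *: x) = s^-1 *: T x.
    rewrite -[_ *: x]addr0 hT //; last by case: hC.
    have T0 : T 0 = 0.
      have := hT 1 (proj1 hC) (proj1 hC); rewrite !scale1r !addr0 => h.
      have : T 0 + 0 = T 0 + T 0 by rewrite addr0 {1}h. by move/addrI.
    by rewrite T0 addr0.
  by rewrite normrZ normfV normr_id mulVf // gt_eqF.
have Ff : F (fun z => ipX z (s^-1 *: x)) by exists (s^-1 *: x).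
have := hM _ Ff (`|x|^-1 *: x).
rewrite normrZ normfV normr_id mulVf ?gt_eqF // lexx => /(_ isT).
rewrite (ipZl hX) (ipZr hX) (ipxx hX) => h.
have : `|x| / s <= M.
  move: h; rewrite normrM normrM !normfV !normr_id normrX normr_id.
  have -> : `|x|^-1 * (s^-1 * `|x| ^+ 2) = `|x| / s.
    by field; rewrite !gt_eqF.
  done.
rewrite ler_pdivrMr // => h2.
apply: (le_trans h2); rewrite ler_pM2r //.
apply: (le_trans (ler_norm M)); rewrite lerDl //.
Qed.

End Fried.


Lemma sq0 (R : realType) (a b : R) : a ^+ 2 + b ^+ 2 = 0 -> a = 0 /\ b = 0.
Proof.
move=> h; have ha := sqr_ge0 a; have hb := sqr_ge0 b.
have a0 : a ^+ 2 = 0 by lra.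
have b0 : b ^+ 2 = 0 by lra.
by move/eqP: a0; rewrite sqrf_eq0 => /eqP; move/eqP: b0; rewrite sqrf_eq0 => /eqP.
Qed.

Lemma norm_eq0' (R : realType) (V : normedModType R) (a b : V) : `|a - b| = 0 -> a = b.
Proof. by move/eqP; rewrite normr_eq0 subr_eq0 => /eqP. Qed.

Lemma biadj (R : realType) (X Y : completeNormedModType R) (ipX : X -> X -> R) (ipY : Y -> Y -> R)
  (hX : is_inner_product ipX) (hY : is_inner_product ipY) (D : set X) (A : X -> Y)
  (Ds : set Y) (As : Y -> X) (hA : dd_closed_op D A) (hAs : is_adjoint ipX ipY D A Ds As) u v :
  (forall h, Ds h -> ipX u (As h) = ipY v h) -> D u /\ A u = v.
Proof.
move=> hyp.
have hC : is_subspace D by case: hA.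
have hT : forall a x y, D x -> D y -> A (a *: x + y) = a *: A x + A y by case: hA.
have hcl := graph_closed hA.
have hcoer : forall x, D x -> `|x| ^+ 2 <= 1 * (1 * `|x| ^+ 2 + `|A x| ^+ 2).
  by move=> x _; rewrite !mul1r lerDl sqr_ge0.
have [xs [Dxs hv]] := min_exists hX hY u v hC hT hcl ler01 ltr01 hcoer.
have [Db Asb] : Ds (A xs - v) /\ As (A xs - v) = u - xs.
  apply: (adj_char hX hA hAs) => phi Dphi.
  have := hv phi Dphi; rewrite mul1r (ipBr hY) (ipBr hX) (ipC hY (A phi) (A xs)) (ipC hX phi xs).
  move=> e; lra.
have e1 := hyp _ Db; rewrite Asb (ipBr hX) (ipBr hY) (ipxx hX) (ipxx hY) (ipC hX u xs) (ipC hY v (A xs)) in e1.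
have e2 := hv _ Dxs; rewrite mul1r !(ipxx hX) (ipxx hY) in e2.
have : `|xs - u| ^+ 2 + `|A xs - v| ^+ 2 = 0.
  rewrite (normB2 hX) (normB2 hY); lra.
move/sq0 => [/norm_eq0' h1 /norm_eq0' h2].
by rewrite -h1.
Qed.

Lemma sq_le (R : realType) (a b M : R) : 0 <= a -> 0 <= M -> a <= M * b -> a ^+ 2 <= M ^+ 2 * (0 * a ^+ 2 + b ^+ 2).
Proof. move=> a0 M0 h; rewrite mul0r add0r; nra. Qed.

Lemma lin0 (R : realType) (X Y : normedModType R) (D : set X) (A : X -> Y) :
  dd_closed_op D A -> A 0 = 0.
Proof.
case=> [[D0 _] hT _ _]; have := hT 1 _ _ D0 D0; rewrite !scale1r !addr0 => h.
have : A 0 + 0 = A 0 + A 0 by rewrite addr0 {1}h. by move/addrI.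
Qed.

Lemma exist_adj (R : realType) (X Y : completeNormedModType R) (ipX : X -> X -> R) (ipY : Y -> Y -> R)
  (hX : is_inner_product ipX) (hY : is_inner_product ipY) (D : set X) (A : X -> Y)
  (Ds : set Y) (As : Y -> X) (hA : dd_closed_op D A) (hAs : is_adjoint ipX ipY D A Ds As)
  (P : X -> X) (hP : is_orth_proj ipX (ran Ds As) P) y :
  ran Ds As y -> exists phi, (Ds `&` ran D A) phi /\ As phi = y.
Proof.
move=> ry.
pose C := D `&` ran Ds As.
have [[D0 DZ] hT _ _] := hA.
have hC : is_subspace C.
  split.
    split => //; exists 0; [exact: (adj0 hX hY hA hAs).1 | exact: (adj0 hX hY hA hAs).2].
  move=> a x z [Dx [x' Dx' ex]] [Dz [z' Dz' ez]]; split; first exact: (DZ a x z Dx Dz).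
  have [? e] := adj_lin hX hY hA hAs a Dx' Dz'.
  by exists (a *: x' + z') => //; rewrite e ex ez.
have hTC : forall a x z, C x -> C z -> A (a *: x + z) = a *: A x + A z.
  by move=> a x z [] Dx _ [] Dz _; exact: hT.
have hE : forall z, exists w, forall x, C x -> ipX z x = ipY (A x) w.
  move=> z; have [[w Dw Pw] orth] := hP z; exists w => x [Dx rx].
  have := orth _ rx; rewrite (ipBl hX) -Pw => /eqP; rewrite subr_eq0 => /eqP ->.
  by rewrite (ipC hX) (hAs.2 _ Dw _ Dx).
have [M [M0 hM]] := friedrichs hX hY hC hTC hE.
have hcoer : forall x, C x -> `|x| ^+ 2 <= M ^+ 2 * (0 * `|x| ^+ 2 + `|A x| ^+ 2).
  move=> x Cx; apply: sq_le => //; [exact: ltW | exact: hM].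
have hcl : forall x w, (forall e, 0 < e -> exists z, C z /\ `|x - z| < e /\ `|w - A z| < e) ->
     C x /\ A x = w.
  move=> x w h.
  have [Dx Ax] : D x /\ A x = w.
    apply: (graph_closed hA) => e e0; have [z [[Dz _] hz]] := h e e0; by exists z.
  split => //; split => //.
  apply: (proj_closed hX hP) => e e0; have [z [[_ rz] [hz _]]] := h e e0; by exists z.
have [chi [Cchi hv]] := min_exists hX hY y 0 hC hTC hcl (lexx 0) (exprn_gt0 2 M0) hcoer.
have [DAchi Asy] : Ds (A chi) /\ As (A chi) = y.
  apply: (adj_char hX hA hAs) => phi Dphi.
  have [Pphi orth] := hP phi.
  pose phi0 := phi - P phi.
  have [Dphi0 Aphi0] : D phi0 /\ A phi0 = 0.
    apply: (biadj hX hY hA hAs) => h Dh.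
    rewrite (ip0l hY); apply: orth; by exists h.
  have e1 : (-1) *: phi0 + phi = P phi by rewrite /phi0 scaleN1r opprB subrK.
  have C1 : C (P phi) by split => //; rewrite -e1; exact: DZ.
  have A1 : A (P phi) = A phi by rewrite -e1 hT // Aphi0 scaler0 add0r.
  rewrite (ipC hY); have := hv _ C1; rewrite mul0r add0r (ip0r hY) addr0 A1 => ->.
  have : ipX phi0 y = 0 by exact: orth.
  by rewrite (ipBl hX) => /eqP; rewrite subr_eq0 => /eqP ->.
exists (A chi); split => //; split => //; exists chi => //; exact: Cchi.1.
Qed.

Lemma exist_op (R : realType) (X Y : completeNormedModType R) (ipX : X -> X -> R) (ipY : Y -> Y -> R)
  (hX : is_inner_product ipX) (hY : is_inner_product ipY) (D : set X) (A : X -> Y)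
  (Ds : set Y) (As : Y -> X) (hA : dd_closed_op D A) (hAs : is_adjoint ipX ipY D A Ds As)
  (P : Y -> Y) (hP : is_orth_proj ipY (ran D A) P) y :
  ran D A y -> exists phi, (D `&` ran Ds As) phi /\ A phi = y.
Proof.
move=> ry.
pose C := Ds `&` ran D A.
have [[D0 DZ] hT _ _] := hA.
have A0 := lin0 hA.
have hC : is_subspace C.
  split.
    split; first exact: (adj0 hX hY hA hAs).1.
    by exists 0.
  move=> a x z [Dx [x' Dx' ex]] [Dz [z' Dz' ez]]; split; first exact: (adj_lin hX hY hA hAs a Dx Dz).1.
  by exists (a *: x' + z'); [exact: DZ | rewrite hT // ex ez].
have hTC : forall a x z, C x -> C z -> As (a *: x + z) = a *: As x + As z.
  by move=> a x z [] Dx _ [] Dz _; exact: (adj_lin hX hY hA hAs a Dx Dz).2.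
have hE : forall z, exists w, forall x, C x -> ipY z x = ipX (As x) w.
  move=> z; have [[w Dw Pw] orth] := hP z; exists w => x [Dx rx].
  have := orth _ rx; rewrite (ipBl hY) -Pw => /eqP; rewrite subr_eq0 => /eqP ->.
  by rewrite (hAs.2 _ Dx _ Dw) (ipC hX).
have [M [M0 hM]] := friedrichs hY hX hC hTC hE.
have hcoer : forall x, C x -> `|x| ^+ 2 <= M ^+ 2 * (0 * `|x| ^+ 2 + `|As x| ^+ 2).
  move=> x Cx; apply: sq_le => //; [exact: ltW | exact: hM].
have hcl : forall x w, (forall e, 0 < e -> exists z, C z /\ `|x - z| < e /\ `|w - As z| < e) ->
     C x /\ As x = w.
  move=> x w h.
  have [Dx Ax] : Ds x /\ As x = w.
    apply: (adj_closed hX hY hA hAs) => e e0; have [z [[Dz _] hz]] := h e e0; by exists z.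
  split => //; split => //.
  apply: (proj_closed hY hP) => e e0; have [z [[_ rz] [hz _]]] := h e e0; by exists z.
have [chi [Cchi hv]] := min_exists hY hX y 0 hC hTC hcl (lexx 0) (exprn_gt0 2 M0) hcoer.
have [DAchi Asy] : D (As chi) /\ A (As chi) = y.
  apply: (biadj hX hY hA hAs) => h Dh.
  have [Ph orth] := hP h.
  pose h0 := h - P h.
  have [Dh0 Ah0] : Ds h0 /\ As h0 = 0.
    apply: (adj_char hX hA hAs) => phi Dphi.
    rewrite (ip0r hX) (ipC hY); apply: orth; by exists phi.
  have e1 : (-1) *: h0 + h = P h by rewrite /h0 scaleN1r opprB subrK.
  have C1 : C (P h) by split => //; rewrite -e1; exact: (adj_lin hX hY hA hAs (-1) Dh0 Dh).1.
  have A1 : As (P h) = As h.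
    by rewrite -e1 (adj_lin hX hY hA hAs (-1) Dh0 Dh).2 Ah0 scaler0 add0r.
  have := hv _ C1; rewrite mul0r add0r (ip0r hX) addr0 A1 (ipC hX) => ->.
  have : ipY h0 y = 0 by exact: orth.
  by rewrite (ipBl hY) (ipC hY) => /eqP; rewrite subr_eq0 => /eqP ->.
exists (As chi); split => //; split => //; exists chi => //; exact: Cchi.1.
Qed.

Lemma val_ident (R : realType) (V : normedModType R) (ip : V -> V -> R) (hip : is_inner_product ip)
  (x xt c a : V) (G : R) :
  G = ip a x -> ip (x - xt - c) a = 0 -> 2 * G - ip (2 *: xt + a) a = `|c| ^+ 2 - `|c - a| ^+ 2.
Proof.
move=> -> h; rewrite !(ipBl hip) in h.
rewrite (normB2 hip) (ipDl hip) (ipZl hip) (ipxx hip) (ipC hip a x); lra.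
Qed.

Lemma val_le (R : realType) (V : normedModType R) (c a : V) : `|c| ^+ 2 - `|c - a| ^+ 2 <= `|c| ^+ 2.
Proof. by rewrite lerBlDr lerDl sqr_ge0. Qed.

Lemma val_eq (R : realType) (V : normedModType R) (c : V) : `|c| ^+ 2 - `|c - c| ^+ 2 = `|c| ^+ 2.
Proof. by rewrite subrr normr0 expr0n /= subr0. Qed.

Lemma shift_ip (R : realType) (V : normedModType R) (ip : V -> V -> R) (hip : is_inner_product ip)
  (xt k xtp a : V) : xt = k + xtp -> ip k a = 0 -> ip (2 *: xtp + a) a = ip (2 *: xt + a) a.
Proof. move=> -> hk; rewrite !(ipDl hip) !(ipZl hip) (ipDl hip) hk; ring. Qed.

Unset Implicit Arguments.

Theorem theorem4p5 (R : realType)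
  (H0 H1 H2 H3 H4 : completeNormedModType R)
  (ip0 : H0 -> H0 -> R) (ip1 : H1 -> H1 -> R) (ip2 : H2 -> H2 -> R)
  (ip3 : H3 -> H3 -> R) (ip4 : H4 -> H4 -> R)
  (hip0 : is_inner_product ip0) (hip1 : is_inner_product ip1)
  (hip2 : is_inner_product ip2) (hip3 : is_inner_product ip3)
  (hip4 : is_inner_product ip4)
  (D0 : set H0) (A0 : H0 -> H1) (D1 : set H1) (A1 : H1 -> H2)
  (D2 : set H2) (A2 : H2 -> H3) (D3 : set H3) (A3 : H3 -> H4)
  (hA0 : dd_closed_op D0 A0) (hA1 : dd_closed_op D1 A1)
  (hA2 : dd_closed_op D2 A2) (hA3 : dd_closed_op D3 A3)
  (Ds1 : set H2) (As1 : H2 -> H1) (hAs1 : is_adjoint ip1 ip2 D1 A1 Ds1 As1)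
  (Ds2 : set H3) (As2 : H3 -> H2) (hAs2 : is_adjoint ip2 ip3 D2 A2 Ds2 As2)
  (hc0 : complex_prop D0 A0 D1 A1) (hc1 : complex_prop D1 A1 D2 A2)
  (hc2 : complex_prop D2 A2 D3 A3)
  (hR1 : closed (ran D1 A1)) (hR2 : closed (ran D2 A2))
  (hK2 : finite_dim (ker D2 A2 `&` ker Ds1 As1))
  (pi2 piA1 piAs2 : H2 -> H2)
  (hpi2 : is_orth_proj ip2 (ker D2 A2 `&` ker Ds1 As1) pi2)
  (hpiA1 : is_orth_proj ip2 (ran D1 A1) piA1)
  (hpiAs2 : is_orth_proj ip2 (ran Ds2 As2) piAs2)
  (f : H3) (g : H1) (k : H2)
  (hf : ran D2 A2 f) (hg : ran Ds1 As1 g) (hk : (ker D2 A2 `&` ker Ds1 As1) k)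
  (x : H2) (hxD2 : D2 x) (hxDs1 : Ds1 x)
  (hA2x : A2 x = f) (hAs1x : As1 x = g) (hpi2x : pi2 x = k)
  (xt : H2) :
  let e := x - xt in
  let eA1 := piA1 e in
  let eK2 := pi2 e in
  let eAs2 := piAs2 e in
  (* (i) *)
  [/\ e = eA1 + eK2 + eAs2,
      ran D1 A1 eA1 /\ (ker D2 A2 `&` ker Ds1 As1) eK2 /\ ran Ds2 As2 eAs2,
      ip2 eA1 eK2 = 0 /\ ip2 eA1 eAs2 = 0 /\ ip2 eK2 eAs2 = 0
    & `|e| ^+ 2 = `|eA1| ^+ 2 + `|eK2| ^+ 2 + `|eAs2| ^+ 2] /\
  (* (ii) *)
  ((forall phi, D1 phi ->
      2 * ip1 g phi - ip2 (2 *: xt + A1 phi) (A1 phi) <= `|eA1| ^+ 2) /\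
   exists phih, (D1 `&` ran Ds1 As1) phih /\ A1 phih = eA1 /\
      2 * ip1 g phih - ip2 (2 *: xt + A1 phih) (A1 phih) = `|eA1| ^+ 2) /\
  (* (iii) *)
  ((forall phi, Ds2 phi ->
      2 * ip3 f phi - ip2 (2 *: xt + As2 phi) (As2 phi) <= `|eAs2| ^+ 2) /\
   exists phih, (Ds2 `&` ran D2 A2) phih /\ As2 phih = eAs2 /\
      2 * ip3 f phih - ip2 (2 *: xt + As2 phih) (As2 phih) = `|eAs2| ^+ 2) /\
  (* (iv) *)
  ((forall theta, (ker D2 A2 `&` ker Ds1 As1) theta ->
      ip2 (2 *: (k - xt) - theta) theta <= `|eK2| ^+ 2) /\
   ip2 (2 *: (k - xt) - eK2) eK2 = `|eK2| ^+ 2) /\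
  (* final remark *)
  (forall xtp, orth_compl ip2 (ker D2 A2 `&` ker Ds1 As1) xtp -> xt = k + xtp ->
    eK2 = 0 /\
    ((forall phi, D1 phi ->
        2 * ip1 g phi - ip2 (2 *: xtp + A1 phi) (A1 phi) <= `|eA1| ^+ 2) /\
     exists phih, (D1 `&` ran Ds1 As1) phih /\ A1 phih = eA1 /\
        2 * ip1 g phih - ip2 (2 *: xtp + A1 phih) (A1 phih) = `|eA1| ^+ 2) /\
    ((forall phi, Ds2 phi ->
        2 * ip3 f phi - ip2 (2 *: xtp + As2 phi) (As2 phi) <= `|eAs2| ^+ 2) /\
     exists phih, (Ds2 `&` ran D2 A2) phih /\ As2 phih = eAs2 /\
        2 * ip3 f phih - ip2 (2 *: xtp + As2 phih) (As2 phih) = `|eAs2| ^+ 2)).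
Proof.
move=> e eA1 eK2 eAs2.
have eE : e = x - xt by [].
clearbody e.
set K2 := ker D2 A2 `&` ker Ds1 As1.
have o1 : forall a z, ran D1 A1 a -> K2 z -> ip2 a z = 0.
  move=> a z [phi Dphi <-] [_ [Dz Az]]; by rewrite (hAs1.2 _ Dz _ Dphi) Az (ip0r hip1).
have o2 : forall a b, ran D1 A1 a -> ran Ds2 As2 b -> ip2 a b = 0.
  move=> a b ra [w Dw <-]; have [Da Aa] := hc1 _ ra.
  by rewrite -(hAs2.2 _ Dw _ Da) Aa (ip0l hip3).
have o3 : forall z b, K2 z -> ran Ds2 As2 b -> ip2 z b = 0.
  move=> z b [[Dz Az] _] [w Dw <-]; by rewrite -(hAs2.2 _ Dw _ Dz) Az (ip0l hip3).
have [rA1 orA1] := hpiA1 e; rewrite -/eA1 in rA1 orA1.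
have [rK2 orK2] := hpi2 e; rewrite -/eK2 in rK2 orK2.
have [rAs2 orAs2] := hpiAs2 e; rewrite -/eAs2 in rAs2 orAs2.
have eqv : forall (S : set H2) c, (forall y, S y -> ip2 (e - c) y = 0) -> forall y, S y -> ip2 e y = ip2 c y.
  by move=> S c h y Sy; apply/eqP; rewrite -subr_eq0 -(ipBl hip2) (h _ Sy).
have eA := eqv _ _ orA1; have eK := eqv _ _ orK2; have eS := eqv _ _ orAs2.
pose r := e - eA1 - eK2 - eAs2.
have rA : forall a, ran D1 A1 a -> ip2 r a = 0.
  move=> a ra; rewrite /r !(ipBl hip2). rewrite (eA _ ra) (ipC hip2 eK2) (ipC hip2 eAs2) (o1 _ _ ra rK2) (o2 _ _ ra rAs2).
  by rewrite subrr !subr0.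
have rK : forall z, K2 z -> ip2 r z = 0.
  move=> z rz; rewrite /r !(ipBl hip2) (eK _ rz) (ipC hip2 eAs2) (o1 _ _ rA1 rz) (o3 _ _ rz rAs2).
  by rewrite !subr0 subrr.
have rS : forall b, ran Ds2 As2 b -> ip2 r b = 0.
  move=> b rb; rewrite /r !(ipBl hip2) (eS _ rb) (o2 _ _ rA1 rb) (o3 _ _ rK2 rb).
  by rewrite !subr0 subrr.
have rKer1 : Ds1 r /\ As1 r = 0.
  apply: (adj_char hip1 hA1 hAs1) => phi Dphi.
  by rewrite (ip0r hip1) (ipC hip2) rA //; exists phi.
have rKer2 : D2 r /\ A2 r = 0.
  apply: (biadj hip2 hip3 hA2 hAs2) => h Dh.
  by rewrite (ip0l hip3) rS //; exists h.
have r0 : r = 0 by apply: (norm0_ip hip2); apply: rK; split.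
have edec : e = eA1 + eK2 + eAs2.
  by apply/eqP; rewrite -subr_eq0; apply/eqP; rewrite -r0 /r !opprD !addrA.
have ok1 : ip2 eA1 eK2 = 0 := o1 _ _ rA1 rK2.
have ok2 : ip2 eA1 eAs2 = 0 := o2 _ _ rA1 rAs2.
have ok3 : ip2 eK2 eAs2 = 0 := o3 _ _ rK2 rAs2.
have hnorm : `|e| ^+ 2 = `|eA1| ^+ 2 + `|eK2| ^+ 2 + `|eAs2| ^+ 2.
  by rewrite edec (normD2 hip2) (normD2 hip2) (ipDl hip2) ok1 ok2 ok3; ring.
have ii_val : forall phi, D1 phi ->
    2 * ip1 g phi - ip2 (2 *: xt + A1 phi) (A1 phi) = `|eA1| ^+ 2 - `|eA1 - A1 phi| ^+ 2.
  move=> phi Dphi; apply: (val_ident hip2 (x := x)).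
    by rewrite (hAs1.2 _ hxDs1 _ Dphi) -hAs1x (ipC hip1).
  by rewrite -eE; apply: orA1; exists phi.
have [ph1 [[Dph1 rph1] Aph1]] := exist_op hip1 hip2 hA1 hAs1 hpiA1 rA1.
have iii_val : forall phi, Ds2 phi ->
    2 * ip3 f phi - ip2 (2 *: xt + As2 phi) (As2 phi) = `|eAs2| ^+ 2 - `|eAs2 - As2 phi| ^+ 2.
  move=> phi Dphi; apply: (val_ident hip2 (x := x)).
    by rewrite -hA2x (hAs2.2 _ Dphi _ hxD2) (ipC hip2).
  by rewrite -eE; apply: orAs2; exists phi.
have [ph2 [[Dph2 rph2] Aph2]] := exist_adj hip2 hip3 hA2 hAs2 hpiAs2 rAs2.
have [_ orx] := hpi2 x; rewrite hpi2x in orx.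
have iv_val : forall th, K2 th -> ip2 (2 *: (k - xt) - th) th = `|eK2| ^+ 2 - `|eK2 - th| ^+ 2.
  move=> th Kth; have h1 := orx _ Kth; have h2 := eK _ Kth.
  rewrite eE in h2; rewrite !(ipBl hip2) in h1 h2.
  rewrite !(ipBl hip2, ipZl hip2) (normB2 hip2) (ipxx hip2); lra.
split; first by split.
split.
  split; first by move=> phi Dphi; rewrite ii_val //; exact: val_le.
  by exists ph1; split; [split | split => //; rewrite ii_val // Aph1 val_eq].
split.
  split; first by move=> phi Dphi; rewrite iii_val //; exact: val_le.
  by exists ph2; split; [split | split => //; rewrite iii_val // Aph2 val_eq].
split.
  split; first by move=> th Kth; rewrite iv_val //; exact: val_le.
  by rewrite iv_val // val_eq.
move=> xtp oxtp hxt.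
have ez : forall z, K2 z -> ip2 e z = 0.
  move=> z Kz; have h1 := orx _ Kz; have h2 := oxtp _ Kz.
  rewrite eE hxt (ipBl hip2) (ipDl hip2) h2; rewrite (ipBl hip2) in h1; lra.
have eK0 : eK2 = 0.
  apply: (norm0_ip hip2); rewrite -eK //; exact: ez.
split => //.
have sh1 : forall phi, D1 phi -> ip2 (2 *: xtp + A1 phi) (A1 phi) = ip2 (2 *: xt + A1 phi) (A1 phi).
  move=> phi Dphi; apply: (shift_ip hip2 hxt); rewrite (ipC hip2); apply: o1 => //; by exists phi.
have sh2 : forall phi, Ds2 phi -> ip2 (2 *: xtp + As2 phi) (As2 phi) = ip2 (2 *: xt + As2 phi) (As2 phi).
  move=> phi Dphi; apply: (shift_ip hip2 hxt); apply: o3 => //; by exists phi.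
split.
  split; first by move=> phi Dphi; rewrite sh1 // ii_val //; exact: val_le.
  by exists ph1; split; [split | split => //; rewrite sh1 // ii_val // Aph1 val_eq].
split; first by move=> phi Dphi; rewrite sh2 // iii_val //; exact: val_le.
by exists ph2; split; [split | split => //; rewrite sh2 // iii_val // Aph2 val_eq].
Qed.
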